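(* Let $q$ be a prime power and let $L\subseteq[q-1]$ with $|L|=s\ge1$. If $\mathcal{F}\subseteq 2^{[n]}$ is $q$-modular $L$-differencing Sperner, then $$|\mathcal{F}|\le\sum_{i=0}^{2^{s-1}}\binom{n}{i}.$$
   Context: $[n]=\{1,\ldots,n\}$, $2^{[n]}$ is the family of all subsets of $[n]$. For $L\subseteq[q-1]$, $\mathcal{F}$ is $q$-modular $L$-differencing Sperner if for all distinct $A,B\in\mathcal{F}$, $|A\setminus B|\equiv\ell\pmod q$ for some $\ell\in L$. *)

(* Defs.v *)
From mathcomp Require Import all_boot.
Set Implicit Arguments. Unset Strict Implicit. Unset Printing Implicit Defensive.

Definition prime_power (q : nat) : Prop :=
  exists p k : nat, prime p /\ 0 < k /\ q = p ^ k.

(* Ground set [n] is represented by 'I_n; 2^[n] by {set 'I_n}. *)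
Definition modular_L_differencing_Sperner (n q : nat) (L : {set 'I_q})
  (F : {set {set 'I_n}}) : Prop :=
  forall A B, A \in F -> B \in F -> A != B ->
    exists2 l, l \in L & #|A :\: B| = nat_of_ord l %[mod q].

(* Main.v *)
Require Import Defs.
From mathcomp Require Import all_boot.
From mathcomp Require Import all_algebra zify.
Set Implicit Arguments. Unset Strict Implicit. Unset Printing Implicit Defensive.
Import GRing.Theory Num.Theory.

Section SA.
Local Open Scope ring_scope.
Section V.
Variable n : nat.
Definition inV (d : nat) (g : {set 'I_n} -> rat) :=
  exists r : seq (rat * {set 'I_n}),
    all (fun pr : rat * {set 'I_n} => (#|pr.2| <= d)%N) r /\
    forall B, g B = \sum_(pr <- r) pr.1 * (pr.2 \subset B)%:R.

Lemma inV_ext d g h : (forall B, g B = h B) -> inV d g -> inV d h.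
Proof. by move=> e [r [H1 H2]]; exists r; split=> // B; rewrite -e. Qed.

Lemma inV_const d a : inV d (fun _ => a).
Proof.
exists [:: (a, set0)]; split; first by rewrite /= cards0.
by move=> B; rewrite big_seq1 /= sub0set mulr1.
Qed.

Lemma inV_ind a : inV 1 (fun B => (a \in B)%:R).
Proof.
exists [:: (1, [set a])]; split; first by rewrite /= cards1.
by move=> B; rewrite big_seq1 /= sub1set mul1r.
Qed.

Lemma inV_add d g h : inV d g -> inV d h -> inV d (fun B => g B + h B).
Proof.
move=> [r [H1 H2]] [r' [H1' H2']]; exists (r ++ r'); split.
  by rewrite all_cat H1 H1'.
by move=> B; rewrite big_cat /= H2 H2'.
Qed.

Lemma inV_mul d1 d2 g h : inV d1 g -> inV d2 h -> inV (d1 + d2) (fun B => g B * h B).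
Proof.
move=> [r [H1 H2]] [r' [H1' H2']].
exists [seq (a.1 * b.1, a.2 :|: b.2) | a <- r, b <- r']; split.
  apply/allP => z /allpairsPdep [a [b [ina inb ->]]] /=.
  apply: leq_trans (leq_card_setU _ _) _. apply: leq_add.
    by move/allP: H1 => /(_ _ ina).
  by move/allP: H1' => /(_ _ inb).
move=> B; rewrite H2 H2' big_allpairs_dep mulr_suml; apply: eq_bigr => a _.
rewrite mulr_sumr; apply: eq_bigr => b _ /=.
rewrite subUset; case: (a.2 \subset B); case: (b.2 \subset B);
  by rewrite /= ?mulr0 ?mul0r ?mulr1 -?mulrA ?[b.1 * _]mulrC ?mulrA.
Qed.

Lemma inV_sum (I : Type) (r : seq I) d (G : I -> {set 'I_n} -> rat) :
  (forall i, inV d (G i)) -> inV d (fun B => \sum_(i <- r) G i B).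
Proof.
move=> HG; elim: r => [|i r IH].
  by apply: inV_ext (inV_const d 0) => B; rewrite big_nil.
by apply: inV_ext (inV_add (HG i) IH) => B; rewrite big_cons.
Qed.

Lemma inV_prod (I : Type) (r : seq I) (d : I -> nat) (G : I -> {set 'I_n} -> rat) :
  (forall i, inV (d i) (G i)) ->
  inV (\sum_(i <- r) d i)%N (fun B => \prod_(i <- r) G i B).
Proof.
move=> HG; elim: r => [|i r IH].
  by apply: inV_ext (inV_const _ 1) => B; rewrite big_nil.
rewrite big_cons; apply: inV_ext (inV_mul (HG i) IH) => B; by rewrite big_cons.
Qed.

Lemma inV_exp d g m : inV d g -> inV (m * d) (fun B => g B ^+ m).
Proof.
move=> Hg; elim: m => [|m IH].
  by apply: inV_ext (inV_const _ 1) => B; rewrite expr0.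
rewrite mulSn; apply: inV_ext (inV_mul Hg IH) => B; by rewrite exprS.
Qed.

Lemma inV_diff (A : {set 'I_n}) (c : rat) :
  inV 1 (fun B => (#|A :\: B|%:R - c)).
Proof.
have H1 a : inV 1 (fun B => 1 - (a \in B)%:R).
  apply: inV_add; first exact: inV_const.
  have := @inV_mul 0 1 _ _ (inV_const 0 (-1)) (inV_ind a).
  by apply: inV_ext => B; rewrite mulN1r.
have H : inV 1 (fun B => \sum_(a <- enum A) (1 - (a \in B)%:R) + (- c)).
  apply: inV_add; last exact: inV_const.
  exact: inV_sum.
apply: inV_ext H => B; congr (_ - _).
rewrite big_enum /= -sum1_card natr_sum big_mkcond /=.
rewrite [RHS]big_mkcond; apply: eq_bigr => a _; rewrite in_setD.
by case: (a \in A); case: (a \in B); rewrite ?subrr ?subr0.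
Qed.
End V.


End SA.

Section SB.
Local Open Scope ring_scope.
Lemma rank_bound n m (A : 'I_m -> {set 'I_n}) d (M : 'M[rat]_m) :
  (forall i, exists g, inV d g /\ forall j, M i j = g (A j)) ->
  (\rank M <= #|[set S : {set 'I_n} | (#|S| <= d)%N]|)%N.
Proof.
move=> HM.
set SS := [set S : {set 'I_n} | (#|S| <= d)%N].
have S0 : set0 \in SS by rewrite inE cards0.
pose R : 'M[rat]_(#|SS|, m) := \matrix_(i, j) ((enum_val (i : 'I_#|SS|)) \subset A j)%:R.
apply: leq_trans (rank_leq_row R); apply: mxrankS.
apply/row_subP => i; have [g [[r [Hr Hg]] HMi]] := HM i.
have -> : row i M = \sum_(pr <- r) pr.1 *: row (enum_rank_in S0 pr.2) R.
  apply/rowP => j; rewrite mxE HMi Hg summxE big_seq [RHS]big_seq; apply: eq_bigr => pr pr_r.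
  rewrite !mxE enum_rankK_in //.
  by rewrite inE; move/allP: Hr => /(_ _ pr_r).
apply: summx_sub => pr _; apply: scalemx_sub; exact: row_sub.
Qed.

End SB.

Lemma sum_eqi (x k : nat) : \sum_(i < k) (x == i :> nat : nat) = (x < k).
Proof.
elim: k => [|k IH]; first by rewrite big_ord0.
rewrite big_ord_recr /= IH ltnS (leq_eqVlt x k).
by case: (ltngtP x k).
Qed.

Lemma card_small n d :
  #|[set S : {set 'I_n} | #|S| <= d]| = \sum_(0 <= i < d.+1) 'C(n, i).
Proof.
rewrite big_mkord.
have E i : 'C(n, i) = \sum_S (#|S : {set 'I_n}| == i : nat).
  have := @card_draws ('I_n) i; rewrite card_ord => <-.
  rewrite -sum1_card big_mkcond; apply: eq_bigr => S _; rewrite inE; by case: (_ == _).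
under [RHS]eq_bigr => i _ do rewrite E.
rewrite exchange_big /= -sum1_card big_mkcond /=.
apply: eq_bigr => S _; rewrite sum_eqi inE ltnS.
by case: (_ <= _).
Qed.

Section SD.
Local Open Scope ring_scope.
Lemma Fp_intr_eq0 p (z : int) : prime p -> ((z%:~R : 'F_p) == 0) = (p%:Z %| z)%Z.
Proof.
move=> pp; rewrite dvdzE /=.
case: z => k.
  by rewrite -(dvdn_pcharf (pchar_Fp pp)).
by rewrite NegzE rmorphN oppr_eq0 /= -(dvdn_pcharf (pchar_Fp pp)).
Qed.

Lemma det_nonzero m (Mz : 'M[int]_m) p e : prime p ->
 (forall i j, i != j -> ((p ^ e.+1)%N%:Z %| Mz i j)%Z) ->
 (forall i, ((p ^ e)%N%:Z %| Mz i i)%Z /\ ~~ ((p ^ e.+1)%N%:Z %| Mz i i)%Z) ->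
 \det Mz != 0.
Proof.
move=> pp Hoff Hdiag.
have pe0 : (p ^ e)%N%:Z != 0 by rewrite eqz_nat -lt0n expn_gt0 prime_gt0.
have Hdv i j : ((p ^ e)%N%:Z %| Mz i j)%Z.
  case: (eqVneq i j) => [<-|ij]; first by case: (Hdiag i).
  apply: dvdz_trans (Hoff _ _ ij); by rewrite dvdzE /= dvdn_exp2l.
pose Nz : 'M[int]_m := \matrix_(i, j) (Mz i j %/ (p ^ e)%N%:Z)%Z.
have -> : Mz = (p ^ e)%N%:Z *: Nz.
  by apply/matrixP => i j; rewrite !mxE mulrC divzK.
rewrite detZ mulf_neq0 ?expf_neq0 //.
have HNoff i j : i != j -> (p%:Z %| Nz i j)%Z.
  move=> /Hoff /dvdzP [c Hc]; rewrite mxE Hc expnS PoszM mulrA mulzK //.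
  exact: dvdz_mull.
have HNd i : ~~ (p%:Z %| Nz i i)%Z.
  apply/negP => /dvdzP [c Hc]; case: (Hdiag i) => H1 /negP; apply.
  rewrite -(divzK H1); rewrite mxE in Hc.
  rewrite Hc expnS PoszM; apply: dvdz_mul; [exact: dvdz_mull | exact: dvdzz].
apply/negP => /eqP H0.
have : \det (map_mx (intr : int -> 'F_p) Nz) == 0 by rewrite det_map_mx H0 rmorph0.
have -> : map_mx (intr : int -> 'F_p) Nz = diag_mx (\row_i (Nz i i)%:~R).
  apply/matrixP => i j; rewrite !mxE; case: (eqVneq i j) => [<-|ij] /=.
    by rewrite mulr1n.
  by rewrite mulr0n; apply/eqP; rewrite Fp_intr_eq0 //; have := HNoff i j ij; rewrite mxE.
rewrite det_diag; apply/negP; apply/prodf_neq0 => i _.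
rewrite mxE Fp_intr_eq0 //; exact: HNd.
Qed.

End SD.

Lemma pow_sum j : \sum_(i < j) 2 ^ i.-1 = if j == 0 then 0 else 2 ^ j.-1.
Proof.
elim: j => [|j IH]; first by rewrite big_ord0.
rewrite big_ord_recr /= IH; case: j {IH} => [|j] //=.
by rewrite expnS mul2n addnn.
Qed.

Lemma ineq s k (t : nat -> nat) j : j < s -> (forall i, i < s -> t i < k) ->
  (forall i i', i <= i' -> i' < s -> t i' <= t i) ->
  (\sum_(i < s) 2 ^ i.-1 * t i).+1 <=
  \sum_(i < s) 2 ^ i.-1 * (if i == j :> nat then k else minn (t i) (t j)).
Proof.
move=> js tk tdec.
pose K' := k.-1 - t j.
pose c (i : nat) := if i < j then 2 ^ i.-1 * K' else 0.
have Hc : \sum_(i < s | i != Ordinal js) c i <= 2 ^ j.-1 * K'.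
  apply: leq_trans (_ : \sum_(i < s) c i <= _).
    by rewrite [X in _ <= X](bigD1 (Ordinal js)) //= leq_addl.
  rewrite -big_mkcond /= -big_distrl /= leq_mul2r; apply/orP; right.
  rewrite (eq_bigl (fun i : 'I_s => true && (i < j))) //.
  rewrite -(@big_ord_widen_cond _ 0 addn j s xpredT (fun i => 2 ^ i.-1) (ltnW js)) pow_sum.
  by case: (j == 0).
rewrite (bigD1 (Ordinal js)) //= [X in _ <= X](bigD1 (Ordinal js)) //= eqxx.
have H2 : \sum_(i < s | i != Ordinal js) 2 ^ i.-1 * t i <=
          \sum_(i < s | i != Ordinal js) (2 ^ i.-1 * (if i == j :> nat then k else minn (t i) (t j)) + c i).
  apply: leq_sum => i /negP ij.
  have ij' : (i : nat) != j by apply/negP => /eqP E; apply: ij; apply/eqP/val_inj.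
  rewrite (negbTE ij') /c.
  have := tk _ (ltn_ord i); have := tk _ js.
  case: (ltngtP i j) => [lt|gt|eq]; last by move: ij'; rewrite eq eqxx.
    have := tdec _ _ (ltnW lt) js; rewrite /K'; move=> h1 h2 h3.
    have -> : minn (t i) (t j) = t j by apply/minn_idPr.
    rewrite -mulnDr leq_mul2l; apply/orP; right; lia.
  have := tdec _ _ (ltnW gt) (ltn_ord i); move=> h1 h2 h3.
  have -> : minn (t i) (t j) = t i by apply/minn_idPl.
  by rewrite addn0.
rewrite big_split /= in H2.
have tjk := tk _ js.
have m1 : 0 < 2 ^ j.-1 by rewrite expn_gt0.
move: Hc H2; rewrite /K'.
set A := \sum_(i < s | _) _; set B := \sum_(i < s | _) _; set C := \sum_(i < s | _) _.
nia.
Qed.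
Import GRing.Theory Num.Theory.

Definition fz (ls : seq nat) (x : nat) : int :=
  (\prod_(j < size ls) (x%:Z - (nth 0 ls j)%:Z) ^+ (2 ^ j.-1))%R.
Definition ee p (ls : seq nat) := \sum_(j < size ls) 2 ^ j.-1 * logn p (nth 0 ls j).

Lemma abs_prod (I : Type) (r : seq I) (F : I -> int) :
  `|(\prod_(i <- r) F i)%R|%N = \prod_(i <- r) `|F i|%N.
Proof.
elim: r => [|i r IH]; first by rewrite !big_nil.
by rewrite !big_cons abszM IH.
Qed.

Lemma logn_prod p (I : Type) (r : seq I) (F : I -> nat) :
  (forall i, 0 < F i) -> logn p (\prod_(i <- r) F i) = \sum_(i <- r) logn p (F i).
Proof.
move=> Fp; elim: r => [|i r IH]; first by rewrite !big_nil logn1.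
rewrite !big_cons lognM ?IH //; apply: prodn_gt0 => ? ; exact: Fp.
Qed.

Lemma dvdn_prod2 (I : Type) (r : seq I) (d F : I -> nat) :
  (forall i, d i %| F i) -> \prod_(i <- r) d i %| \prod_(i <- r) F i.
Proof.
move=> H; elim: r => [|i r IH]; first by rewrite !big_nil.
by rewrite !big_cons dvdn_mul.
Qed.

Lemma fz0_div p ls : prime p -> (forall j, j < size ls -> 0 < nth 0 ls j) ->
  ((p ^ ee p ls)%N%:Z %| fz ls 0)%Z /\ ~~ ((p ^ (ee p ls).+1)%N%:Z %| fz ls 0)%Z.
Proof.
move=> pp lpos.
have E : `|fz ls 0|%N = \prod_(j < size ls) (nth 0 ls j) ^ (2 ^ j.-1).
  rewrite /fz abs_prod; apply: eq_bigr => j _.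
  by rewrite abszX sub0r abszN.
have P0 : 0 < \prod_(j < size ls) (nth 0 ls j) ^ (2 ^ j.-1).
  by apply: prodn_gt0 => j; rewrite expn_gt0 lpos.
have L : logn p (\prod_(j < size ls) (nth 0 ls j) ^ (2 ^ j.-1)) = ee p ls.
  rewrite logn_prod; last by move=> j; rewrite expn_gt0 lpos.
  by apply: eq_bigr => j _; rewrite lognX.
rewrite !dvdzE /= E !pfactor_dvdn // L leqnn; split=> //.
by rewrite ltnn.
Qed.

Lemma fz_off p k ls x j : prime p -> j < size ls ->
  (forall i, i < size ls -> 0 < nth 0 ls i < p ^ k) ->
  (forall i i', i <= i' -> i' < size ls -> logn p (nth 0 ls i') <= logn p (nth 0 ls i)) ->
  x %% p ^ k = nth 0 ls j %% p ^ k ->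
  ((p ^ (ee p ls).+1)%N%:Z %| fz ls x)%Z.
Proof.
move=> pp js lb ldec hx.
pose t i := logn p (nth 0 ls i).
have tk i : i < size ls -> t i < k.
  move=> il; have /andP [l0 lk] := lb i il.
  rewrite -(ltn_exp2l _ _ (prime_gt1 pp)); apply: leq_ltn_trans lk.
  by apply: dvdn_leq => //; rewrite pfactor_dvdn.
have := ineq js tk ldec.
set S := \sum_(i < _) _ => HS.
rewrite dvdzE /=; apply: dvdn_trans (dvdn_exp2l p HS) _.
rewrite expn_sum /fz abs_prod; apply: dvdn_prod2 => i.
rewrite abszX mulnC expnM; apply: dvdn_exp2r.
set a := if _ then _ else _.
have hq : ((p ^ k)%N%:Z %| ((Posz x) - (Posz (nth 0%N ls j)))%R)%Z.
  by rewrite -eqz_mod_dvd; apply/eqP; rewrite !modz_nat hx.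
rewrite -[p ^ a]/(`|Posz (p ^ a)|%N) -dvdzE.
rewrite /a; case: eqP => [ij|ij]; first by rewrite ij.
have /andP [li0 _] := lb i (ltn_ord i).
have /andP [lj0 _] := lb j js.
have d1 : ((p ^ minn (t i) (t j))%N%:Z %| (Posz (nth 0%N ls i)))%Z.
  by rewrite dvdzE /= pfactor_dvdn // geq_minl.
have d2 : ((p ^ minn (t i) (t j))%N%:Z %| (Posz (nth 0%N ls j)))%Z.
  by rewrite dvdzE /= pfactor_dvdn // geq_minr.
have d3 : ((p ^ minn (t i) (t j))%N%:Z %| ((Posz x) - (Posz (nth 0%N ls j)))%R)%Z.
  apply: dvdz_trans hq; rewrite dvdzE /= dvdn_exp2l //.
  by apply: leq_trans (geq_minr _ _) (ltnW (tk _ js)).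
have -> : ((Posz x) - (Posz (nth 0%N ls i)) = ((Posz x) - (Posz (nth 0%N ls j))) + (Posz (nth 0%N ls j)) - (Posz (nth 0%N ls i)))%R.
  by rewrite subrK.
by apply: rpredB => //; apply: rpredD.
Qed.
Theorem mainTheorem8 (n q s : nat) (L : {set 'I_q}) (F : {set {set 'I_n}}) :
  prime_power q ->
  (forall l : 'I_q, l \in L -> 1 <= nat_of_ord l) ->
  #|L| = s -> 1 <= s ->
  modular_L_differencing_Sperner L F ->
  #|F| <= \sum_(0 <= i < (2 ^ s.-1).+1) 'C(n, i).
Proof.
move=> [p [k [pp [k0 qE]]]] Lpos Ls s1 HF.
pose leT := fun a b : nat => logn p b <= logn p a.
pose ls := sort leT [seq nat_of_ord l | l <- enum L].
have size_ls : size ls = s by rewrite size_sort size_map -cardE.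
have mem_ls (l : 'I_q) : l \in L -> nat_of_ord l \in ls.
  by move=> lL; rewrite mem_sort; apply: map_f; rewrite mem_enum.
have lb i : i < size ls -> 0 < nth 0 ls i < p ^ k.
  move=> il; have := mem_nth 0 il; rewrite mem_sort => /mapP [l].
  rewrite mem_enum => lL ->; rewrite Lpos //= -qE; exact: ltn_ord.
have ldec i i' : i <= i' -> i' < size ls -> logn p (nth 0 ls i') <= logn p (nth 0 ls i).
  move=> ii' i's.
  have tr : transitive leT by move=> a b c; rewrite /leT => h1 h2; apply: leq_trans h2 h1.
  have rf : reflexive leT by move=> a; rewrite /leT.
  have srt : sorted leT ls by apply: sort_sorted => a b; rewrite /leT; exact: leq_total.
  apply: (sorted_leq_nth tr rf 0 srt) => //; rewrite inE //.
  exact: leq_ltn_trans i's.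
pose m := #|F|.
pose A (i : 'I_m) : {set 'I_n} := enum_val i.
pose Mz : 'M[int]_m := (\matrix_(i, j) fz ls #|A i :\: A j|)%R.
have detMz : (\det Mz != 0)%R.
  apply: (det_nonzero (p := p) (e := ee p ls)) => //.
    move=> i j ij; rewrite mxE.
    have Aij : A i != A j by apply: contra ij => /eqP /enum_val_inj ->.
    have [l lL hl] := HF _ _ (enum_valP i) (enum_valP j) Aij.
    have li := mem_ls _ lL.
    apply: (fz_off (k := k) (j := index (nat_of_ord l) ls) pp) => //.
      by rewrite index_mem.
    by rewrite nth_index // -qE.
  move=> i; rewrite mxE setDv cards0; apply: fz0_div => // j jl.
  by have /andP [] := lb j jl.
pose Mq : 'M[rat]_m := map_mx (intr : int -> rat) Mz.
have rk : \rank Mq = m.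
  apply: mxrank_unit; rewrite unitmxE unitfE det_map_mx /= intr_eq0 //.
pose D := \sum_(j < size ls) (2 ^ j.-1 * 1).
have HD : D = 2 ^ s.-1.
  rewrite /D; under eq_bigr => j _ do rewrite muln1.
  by rewrite pow_sum size_ls; case: (s) s1.
rewrite -HD -card_small -/m -rk.
apply: (rank_bound (A := A)) => i.
exists (fun B => ((fz ls #|A i :\: B|)%:~R)%R); split; last by move=> j; rewrite !mxE.
have := @inV_prod n _ (index_enum 'I_(size ls)) (fun j : 'I_(size ls) => 2 ^ j.-1 * 1)
  (fun j B => ((#|A i :\: B|%:R - (nth 0 ls j)%:R) ^+ (2 ^ j.-1))%R)
  (fun j => inV_exp _ (inV_diff _ _)).
apply: inV_ext => B.
rewrite /fz rmorph_prod; apply: eq_bigr => j _.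
by rewrite rmorphXn rmorphB.
Qed.
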